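(* Let $q=2$ and let $\mathcal{A}=(\mathbb{G}_a^2,\Phi)$ be the $T$-module defined by \[\Phi(T)=TI_2+\begin{pmatrix}0&0\\1&0\end{pmatrix}\tau.\] Then $\mathcal{A}$ is not abelian.
   Context: $A=\mathbb{F}_2[T]$, $k=\mathbb{F}_2(T)$, $\tau$ the Frobenius $z\mapsto z^2$ acting coordinatewise, with $\tau M=M^{(2)}\tau$ for matrices. $\mathrm{Hom}_k(\mathcal{A},\mathbb{G}_a)$, the $\mathbb{F}_2$-linear algebraic group homomorphisms $\mathbb{G}_a^2\to\mathbb{G}_a$ defined over $k$, is identified with $k\{\tau\}^2$ and made into a $k[T]$-module by letting $k$ act by left multiplication and $T\cdot f=f\circ\Phi(T)$. $\mathcal{A}$ is abelian if this $k[T]$-module has finite rank (equivalently here, is finitely generated). *)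

(* Defs.v *)
From HB Require Import structures.
From mathcomp Require Import all_boot all_order all_algebra fraction.
Set Implicit Arguments. Unset Strict Implicit. Unset Printing Implicit Defensive.
Import GRing.Theory.
Local Open Scope ring_scope.

Definition kF := {fraction {poly 'F_2}}.
Definition Tk : kF := @FracField.tofrac {poly 'F_2} 'X.

(* Twisted polynomials k{tau}: an element sum_i a_i tau^i is represented by
   its (canonical, trailing-zero-free) coefficient list, stored as a {poly kF}
   whose i-th coefficient is a_i.  Only the additive structure and the scalar
   action of {poly kF} are used; the ring structure of k{tau} is [tmul]. *)
Definition twpoly := {poly kF}.

(* Twisted product, with tau c = c^2 tau (q = 2):
   (a tau^i)(b tau^j) = a b^(2^i) tau^(i+j). *)
Definition tmul (p q : twpoly) : twpoly :=
  \sum_(i < size p) \sum_(j < size q) ((p`_i * q`_j ^+ (2 ^ i)) *: 'X^(i + j)).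

(* Phi(T) = T I_2 + [[0,0],[1,0]] tau, as a 2x2 matrix over k{tau}
   (entries indexed by 'I_2, row index first). *)
Definition PhiT (i j : 'I_2) : twpoly :=
  (if i == j then Tk%:P else 0) +
  (if (nat_of_ord i == 1%N) && (nat_of_ord j == 0%N) then 'X else 0).

(* Hom_k(A, G_a) = k{tau}^2: f = (f_0, f_1) acts by (x_0,x_1) |-> f_0(x_0)+f_1(x_1). *)
Definition HomA := 'rV[twpoly]_2.

(* T . f = f o Phi(T), i.e. (f o Phi(T))_i = sum_j f_j Phi(T)_{j i}. *)
Definition Tact (f : HomA) : HomA :=
  \row_i \sum_j tmul (f 0 j) (PhiT j i).

Definition kact (c : kF) (f : HomA) : HomA := map_mx (fun p => c *: p) f.

Definition pact (P : {poly kF}) (f : HomA) : HomA :=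
  \sum_(n < size P) kact P`_n (iter n Tact f).

(* A is abelian iff Hom_k(A, G_a) is a finitely generated k[T]-module. *)
Definition is_abelian : Prop :=
  exists (n : nat) (g : 'I_n -> HomA),
    forall f : HomA, exists c : 'I_n -> {poly kF},
      f = \sum_(j < n) pact (c j) (g j).

(* Main.v *)
Require Import Defs.
From mathcomp Require Import all_boot all_order all_algebra fraction.
From mathcomp Require Import zify.
Import GRing.Theory.
Local Open Scope ring_scope.

Lemma size_tmul (p q : twpoly) : (size q <= 1)%N ->
  (size (tmul p q) <= size p * size q)%N.
Proof.
move=> hq; rewrite /tmul.
apply: (big_ind (fun r : twpoly => size r <= size p * size q)%N).
- by rewrite size_poly0.
- by move=> x y hx hy; apply: leq_trans (size_polyD _ _) _; rewrite geq_max hx hy.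
move=> i _.
apply: (big_ind (fun r : twpoly => size r <= size p * size q)%N).
- by rewrite size_poly0.
- by move=> x y hx hy; apply: leq_trans (size_polyD _ _) _; rewrite geq_max hx hy.
move=> j _.
apply: leq_trans (size_scale_leq _ _) _.
rewrite size_polyXn.
have := ltn_ord i; have := ltn_ord j; move: hq.
move: (size p) (size q) (nat_of_ord i) (nat_of_ord j) => a b c d. nia.
Qed.

Definition one2 : 'I_2 := Ordinal (isT : (1 < 2)%N).

Definition inv (B : nat) (f : HomA) := (size (f ord0 one2) <= B)%N.

Lemma inv_add B f g : inv B f -> inv B g -> inv B (f + g).
Proof.
rewrite /inv mxE => hf hg.
by apply: leq_trans (size_polyD _ _) _; rewrite geq_max hf hg.
Qed.

Lemma inv_0 B : inv B 0.
Proof. by rewrite /inv mxE size_poly0. Qed.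

Lemma inv_kact B c f : inv B f -> inv B (kact c f).
Proof. by rewrite /inv /kact mxE => h; apply: leq_trans (size_scale_leq _ _) h. Qed.

Lemma inv_Tact B f : inv B f -> inv B (Tact f).
Proof.
rewrite /inv /Tact mxE => h.
apply: (big_ind (fun r : twpoly => size r <= B)%N).
- by rewrite size_poly0.
- by move=> x y hx hy; apply: leq_trans (size_polyD _ _) _; rewrite geq_max hx hy.
case=> [[|[|//]]] Hj _.
- have hs : size (PhiT (Ordinal Hj) one2) = 0%N.
    by rewrite /PhiT /= addr0 size_poly0.
  have hq : (size (PhiT (Ordinal Hj) one2) <= 1)%N by rewrite hs.
  have := size_tmul (f ord0 (Ordinal Hj)) _ hq.
  by rewrite hs muln0 leqn0 => /eqP ->.
- have -> : Ordinal Hj = one2 by apply: val_inj.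
  have hs : (size (PhiT one2 one2) <= 1)%N.
    by rewrite /PhiT /= addr0 size_polyC leq_b1.
  apply: leq_trans (size_tmul _ _ hs) _.
  by apply: leq_trans (leq_mul h hs) _; rewrite muln1.
Qed.

Lemma inv_iter B n f : inv B f -> inv B (iter n Tact f).
Proof. by elim: n => //= n IH h; apply: inv_Tact; apply: IH. Qed.

Lemma inv_pact B P f : inv B f -> inv B (pact P f).
Proof.
move=> h; rewrite /pact.
apply: (big_ind (inv B)); [exact: inv_0|exact: inv_add|].
by move=> i _; apply: inv_kact; apply: inv_iter.
Qed.

Theorem proposition7 : ~ is_abelian.
Proof.
case=> n [g hg].
pose B := (\max_(j < n) size (g j ord0 one2))%N.
have hgj : forall j, inv B (g j) by move=> j; exact: (leq_bigmax j).
pose f : HomA := \row_(i < 2) ('X^B : twpoly).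
have [c hc] := hg f.
have : inv B f.
  rewrite hc; apply: (big_ind (inv B)); [exact: inv_0|exact: inv_add|].
  by move=> j _; apply: inv_pact.
by rewrite /inv mxE size_polyXn ltnn.
Qed.
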